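(* Let $q$ be a prime power, let $m,n$ be positive integers and let $\mathcal{C}_2 \subsetneqq \mathcal{C}_1 \subseteq \mathbb{F}_q^{m \times n}$ be $\mathbb{F}_q$-linear codes, with $\ell = \dim(\mathcal{C}_1) - \dim(\mathcal{C}_2)$. Encode a message as follows: fix a subspace $\mathcal{W}$ with $\mathcal{C}_1 = \mathcal{C}_2 \oplus \mathcal{W}$ and an $\mathbb{F}_q$-linear isomorphism $\psi : \mathbb{F}_q^\ell \to \mathcal{W}$; the message $\mathbf{x}$ is uniformly distributed on $\mathbb{F}_q^\ell$ and is encoded as $C = \psi(\mathbf{x}) + D$, where $D$ is uniformly distributed on $\mathcal{C}_2$ and independent of $\mathbf{x}$. An adversary wire-tapping $\mu$ links observes $CB^T \in \mathbb{F}_q^{m \times \mu}$ for some matrix $B \in \mathbb{F}_q^{\mu \times n}$. Mutual information $I(\cdot;\cdot)$ is computed with logarithms to base $q$. Then: (1) for every integer $1 \leq r \leq \ell$, $d_{M,r}(\mathcal{C}_2^\perp, \mathcal{C}_1^\perp) = \min\{\mu \geq 0 \mid \exists B \in \mathbb{F}_q^{\mu \times n} \text{ with } I(\mathbf{x}; CB^T) \geq r\}$; (2) for every integer $0 \leq \mu \leq n$, $K_{M,\mu}(\mathcal{C}_2^\perp, \mathcal{C}_1^\perp) = \max\{ I(\mathbf{x}; CB^T) \mid B \in \mathbb{F}_q^{\mu' \times n},\ 0 \leq \mu' \leq \mu\}$ (where for $\mu' = 0$ the observation is trivial and gives zero information); (3) $t = d_R(\mathcal{C}_2^\perp, \mathcal{C}_1^\perp)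 - 1$ is the largest integer $\mu$ such that $I(\mathbf{x}; CB^T) = 0$ for every $B \in \mathbb{F}_q^{\mu \times n}$.
   Context: For $C \in \mathbb{F}_q^{m\times n}$, ${\rm Row}(C) \subseteq \mathbb{F}_q^n$ is its row space and ${\rm Rk}(C) = \dim {\rm Row}(C)$. For a subspace $\mathcal{L} \subseteq \mathbb{F}_q^n$, the rank support space is $\mathcal{V}_\mathcal{L} = \{V \in \mathbb{F}_q^{m \times n} \mid {\rm Row}(V) \subseteq \mathcal{L}\}$. For nested linear codes $\mathcal{D}_2 \subsetneqq \mathcal{D}_1 \subseteq \mathbb{F}_q^{m\times n}$ and $1 \le r \le \dim \mathcal{D}_1 - \dim \mathcal{D}_2$, the $r$-th relative generalized matrix weight is $d_{M,r}(\mathcal{D}_1,\mathcal{D}_2) = \min\{\dim \mathcal{L} \mid \mathcal{L} \subseteq \mathbb{F}_q^n \text{ subspace}, \dim(\mathcal{D}_1 \cap \mathcal{V}_\mathcal{L}) - \dim(\mathcal{D}_2 \cap \mathcal{V}_\mathcal{L}) \geq r\}$; for $0 \le \mu \le n$ the relative dimension/rank support profile is $K_{M,\mu}(\mathcal{D}_1,\mathcal{D}_2) = \max\{\dim(\mathcal{D}_1 \cap \mathcal{V}_\mathcal{L}) - \dim(\mathcal{D}_2 \cap \mathcal{V}_\mathcal{L}) \mid \mathcal{L} \subseteq \mathbb{F}_q^n, \dim \mathcal{L} \le \mu\}$; and $d_R(\mathcal{D}_1,\mathcal{D}_2) = \min\{{\rm Rk}(C) \mid C \in \mathcal{D}_1,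 C \notin \mathcal{D}_2\}$. The dual of a linear code $\mathcal{C} \subseteq \mathbb{F}_q^{m \times n}$ is $\mathcal{C}^\perp = \{D \mid {\rm Trace}(CD^T) = 0 \ \forall C \in \mathcal{C}\}$; note $\mathcal{C}_1^\perp \subsetneqq \mathcal{C}_2^\perp$. *)

(* Defs.v *)
From HB Require Import structures.
From mathcomp Require Import all_boot all_order all_algebra.
From mathcomp Require Import all_classical all_reals all_analysis.

Set Implicit Arguments.
Unset Strict Implicit.
Unset Printing Implicit Defensive.

Import Order.TTheory GRing.Theory Num.Theory.
Local Open Scope ring_scope.

Section Info.
Variable R : realType.
Variable T : finType.
Variable Omega : {set T}.

Definition uprob (E : pred T) : R :=
  (#|[set w in Omega | E w]|)%:R / (#|Omega|)%:R.

Definition mutinfo (A B : finType) (X : T -> A) (Y : T -> B) (b : R) : R :=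
  \sum_(a : A) \sum_(y : B)
    let pab := uprob [pred w | (X w == a) && (Y w == y)] in
    let pa := uprob [pred w | X w == a] in
    let pb := uprob [pred w | Y w == y] in
    if pab == 0 then 0 else pab * (ln (pab / (pa * pb)) / ln b).
End Info.

Section Codes.
Variable F : finFieldType.
Variables m n : nat.

Definition dual_code (C : {vspace 'M[F]_(m, n)}) : {vspace 'M[F]_(m, n)} :=
  <<[seq D <- enum 'M[F]_(m, n) |
       [forall C0 : 'M[F]_(m, n), (C0 \in C) ==> (\tr (C0 *m D^T) == 0%R)]]>>%VS.

(* A subspace L of F^n is represented as the row space of a matrix
   A : 'M_n (every subspace arises so); dim L = \rank A.
   Rank support space V_L = { V | Row(V) \subseteq L }. *)
Definition rk_supp (A : 'M[F]_n) : {vspace 'M[F]_(m, n)} :=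
  <<[seq V <- enum 'M[F]_(m, n) | (V <= A)%MS]>>%VS.

Definition reldim (D1 D2 : {vspace 'M[F]_(m, n)}) (A : 'M[F]_n) : nat :=
  (\dim (D1 :&: rk_supp A) - \dim (D2 :&: rk_supp A))%N.

(* r-th relative generalized matrix weight d_{M,r}(D1,D2)
   (the set is non-empty whenever 1 <= r <= dim D1 - dim D2) *)
Definition dMr (D1 D2 : {vspace 'M[F]_(m, n)}) (r : nat) : nat :=
  \big[minn/n]_(A : 'M[F]_n | (r <= reldim D1 D2 A)%N) \rank A.

Definition KMmu (D1 D2 : {vspace 'M[F]_(m, n)}) (mu : nat) : nat :=
  \max_(A : 'M[F]_n | (\rank A <= mu)%N) reldim D1 D2 A.

(* relative minimum rank distance d_R(D1,D2)
   (non-empty set whenever D2 is strictly contained in D1) *)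
Definition dR (D1 D2 : {vspace 'M[F]_(m, n)}) : nat :=
  \big[minn/n]_(C : 'M[F]_(m, n) | (C \in D1) && (C \notin D2)) \rank C.

(* The wiretap scheme: sample space of pairs (x, D) with x in F^l and
   D in C2, uniform on it (i.e. x uniform, D uniform on C2, independent). *)
Definition wt_space (l : nat) (C2 : {vspace 'M[F]_(m, n)}) :
  {set 'rV[F]_l * 'M[F]_(m, n)} := [set w | w.2 \in C2].

Definition wt_info (R : realType) (l : nat) (C2 : {vspace 'M[F]_(m, n)})
  (psi : 'rV[F]_l -> 'M[F]_(m, n)) (mu : nat) (B : 'M[F]_(mu, n)) : R :=
  mutinfo (wt_space l C2) (fun w => w.1)
    (fun w => (psi w.1 + w.2) *m B^T) (#|F|)%:R.
End Codes.

(* Main.v *)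
Require Import Defs.
From HB Require Import structures.
From mathcomp Require Import all_boot all_order all_algebra.
From mathcomp Require Import all_classical all_reals all_analysis.
From mathcomp Require Import all_field.
From mathcomp Require Import zify ring lra.

Import Order.TTheory GRing.Theory Num.Theory.
Local Open Scope ring_scope.

Section LinAlg.
Variable F : finFieldType.

Lemma mem_span_filter p q (P : pred 'M[F]_(p, q)) :
  P 0 -> (forall a u v, P u -> P v -> P (a *: u + v)) ->
  forall x, (x \in <<[seq V <- enum 'M[F]_(p, q) | P V]>>%VS) = P x.
Proof.
move=> P0 Plin x; apply/idP/idP => [xs|Px]; last first.
  by apply: memv_span; rewrite mem_filter Px mem_enum.
rewrite (coord_span (X := in_tuple _) xs).
apply: (big_ind P) => //.
  by move=> u v Pu Pv; rewrite -(scale1r u) Plin.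
move=> i _; rewrite -[_ *: _]addr0; apply: Plin => //.
have : (in_tuple [seq V <- enum 'M[F]_(p, q) | P V])`_i \in
   [seq V <- enum 'M[F]_(p, q) | P V] by apply: mem_nth; exact: ltn_ord.
by rewrite mem_filter => /andP[].
Qed.

Lemma mem_rk_supp m n (A : 'M[F]_n) (V : 'M[F]_(m, n)) :
  (V \in rk_supp m A) = (V <= A)%MS.
Proof.
rewrite /rk_supp mem_span_filter //; first by rewrite sub0mx.
by move=> a u v Hu Hv; rewrite addmx_sub // scalemx_sub.
Qed.

Lemma mem_dual m n (C : {vspace 'M[F]_(m, n)}) D :
  (D \in dual_code C) = [forall C0, (C0 \in C) ==> (\tr (C0 *m D^T) == 0)].
Proof.
rewrite /dual_code mem_span_filter //.
  by apply/forallP => C0; rewrite trmx0 mulmx0 mxtrace0 eqxx implybT.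
move=> a u v /forallP Hu /forallP Hv; apply/forallP => C0.
apply/implyP => C0C; move/implyP: (Hu C0) => /(_ C0C)/eqP Hu'.
move/implyP: (Hv C0) => /(_ C0C)/eqP Hv'.
by rewrite linearD linearZ /= mulmxDr -scalemxAr mxtraceD mxtraceZ Hu' Hv' mulr0 addr0.
Qed.

Lemma mem_dualP m n (C : {vspace 'M[F]_(m, n)}) D :
  reflect (forall C0, C0 \in C -> \tr (C0 *m D^T) = 0) (D \in dual_code C).
Proof.
rewrite mem_dual; apply: (iffP forallP) => H C0.
  by move=> C0C; move/implyP: (H C0) => /(_ C0C)/eqP.
by apply/implyP => /H ->.
Qed.

Lemma trace_mxvec p q (C D : 'M[F]_(p, q)) :
  \tr (C *m D^T) = (mxvec C *m (mxvec D)^T) 0 0.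
Proof.
transitivity (\sum_(ij : 'I_p * 'I_q) C ij.1 ij.2 * D ij.1 ij.2).
  rewrite /mxtrace -(pair_bigA _ (fun i j => C i j * D i j)) /=.
  apply: eq_bigr => i _; rewrite !mxE.
  by apply: eq_bigr => j _; rewrite !mxE.
rewrite mxE (reindex _ (curry_mxvec_bij _ _)) /=.
by apply: eq_bigr => -[i j] _; rewrite /= !mxE !mxvecE.
Qed.

End LinAlg.

Section Dual.
Variable F : finFieldType.

Lemma dim_dual p q (S : {vspace 'M[F]_(p, q)}) :
  (\dim (dual_code S) + \dim S = p * q)%N.
Proof.
set k := \dim S; set b := vbasis S.
pose P : 'M[F]_(k, p * q) := \matrix_(i < k) mxvec b`_i.
pose h : 'Hom('M[F]_(p, q), 'rV[F]_k) := linfun (mulmxr P^T \o mxvec).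
have hE D : h D = mxvec D *m P^T by rewrite lfunE.
have hent D i : h D 0 i = \tr (b`_i *m D^T).
  by rewrite hE trace_mxvec !mxE; apply: eq_bigr => a _; rewrite !mxE mulrC.
have kerh : lker h = dual_code S.
  apply/vspaceP => D; rewrite memv_ker; apply/eqP/mem_dualP => [h0 C0 C0S|H].
    rewrite (coord_vbasis C0S) mulmx_suml linear_sum big1 // => i _.
    by rewrite -scalemxAl linearZ /= -hent h0 mxE mulr0.
  apply/rowP => i; rewrite hent mxE; apply: H.
  by apply: vbasis_mem; apply: mem_nth; rewrite size_tuple.
have freeb : free b by exact: basis_free (vbasisP S).
have rfP : row_free P.
  rewrite -kermx_eq0 -submx0; apply/rV_subP => u /sub_kermxP uP0.
  rewrite submx0; apply/eqP/rowP => j; rewrite mxE.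
  have -> : u 0 j = coord b j (\sum_(i < k) u 0 i *: b`_i) by rewrite coord_sum_free.
  suff -> : \sum_(i < k) u 0 i *: b`_i = 0 by rewrite linear0.
  rewrite mulmx_sum_row in uP0; apply/eqP; rewrite -mxvec_eq0 linear_sum /=.
  by apply/eqP; rewrite -[RHS]uP0; apply: eq_bigr => i _; rewrite linearZ /= rowK.
have imh : limg h = fullv.
  apply/eqP; rewrite eqEsubv subvf /=; apply/subvP => v _.
  have : (v <= P^T)%MS by apply: submx_full; rewrite /row_full mxrank_tr; exact: rfP.
  case/submxP => u ->.
  by rewrite -[u]vec_mxK -hE; apply: memv_img; apply: memvf.
have := limg_ker_dim h fullv.
rewrite capfv kerh imh !dimvf /= /dim /= => <-.
by rewrite mul1n.
Qed.

End Dual.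

Section Reduction.
Variable F : finFieldType.
Variables m n mu : nat.
Variable B : 'M[F]_(mu, n).

Definition fB : 'Hom('M[F]_(m, n), 'M[F]_(m, mu)) := linfun (mulmxr B^T).
Definition gB : 'Hom('M[F]_(m, mu), 'M[F]_(m, n)) := linfun (mulmxr B).

Lemma fBE C : fB C = C *m B^T. Proof. by rewrite lfunE. Qed.
Lemma gBE Y : gB Y = Y *m B. Proof. by rewrite lfunE. Qed.

Lemma dual_cap_rk (C : {vspace 'M[F]_(m, n)}) :
  (dual_code C :&: rk_supp m <<B>>%MS)%VS = (gB @: dual_code (fB @: C))%VS.
Proof.
apply/vspaceP => D; rewrite memv_cap mem_rk_supp genmxE.
apply/andP/memv_imgP => [[/mem_dualP DC /submxP[Y DY]]|[Y /mem_dualP YC ->]].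
  exists Y; last by rewrite gBE DY.
  apply/mem_dualP => Z /memv_imgP[C0 C0C ->].
  by rewrite fBE -mulmxA -trmx_mul -DY DC.
rewrite gBE submxMl; split => //; apply/mem_dualP => C0 C0C.
by rewrite trmx_mul mulmxA -fBE YC // memv_img.
Qed.

Lemma ker_gB_sub (S : {vspace 'M[F]_(m, n)}) :
  (lker gB <= dual_code (fB @: S))%VS.
Proof.
apply/subvP => Y; rewrite memv_ker gBE => /eqP YB0.
apply/mem_dualP => Z /memv_imgP[C0 _ ->].
by rewrite fBE -mulmxA -trmx_mul YB0 trmx0 mulmx0 mxtrace0.
Qed.

Lemma dim_dual_cap (C : {vspace 'M[F]_(m, n)}) :
  (\dim (dual_code C :&: rk_supp m <<B>>%MS) + \dim (lker gB)
     + \dim (fB @: C) = m * mu)%N.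
Proof.
rewrite dual_cap_rk -((@dim_dual _ _ _ (fB @: C)%VS)) -(limg_ker_dim gB (dual_code (fB @: C)%VS)).
by rewrite (capv_idPr (ker_gB_sub _)) [(\dim (lker _) + _)%N]addnC.
Qed.

Lemma reldim_eq (C1 C2 : {vspace 'M[F]_(m, n)}) :
  (C2 <= C1)%VS ->
  reldim (dual_code C2) (dual_code C1) <<B>>%MS =
  (\dim (fB @: C1) - \dim (fB @: C2))%N.
Proof.
move=> C21; rewrite /reldim.
have := dim_dual_cap C1; have := dim_dual_cap C2.
have := dimvS (limgS fB C21).
lia.
Qed.

End Reduction.
Arguments fB {F} m {n mu} B.
Arguments gB {F} m {n mu} B.

Set Implicit Arguments.
Unset Strict Implicit.

Lemma sum_card_fiber (T A : finType) (S : {set T}) (g : T -> A) :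
  (\sum_(y : A) #|[set w in S | g w == y]| = #|S|)%N.
Proof.
rewrite -sum1_card (partition_big g predT) //=.
by apply: eq_bigr => y _; rewrite -sum1_card; apply: eq_bigl => w; rewrite !inE.
Qed.

Lemma sum_card_fiber2 (T A B : finType) (S : {set T}) (f : T -> A) (g : T -> B) :
  (\sum_(a : A) \sum_(y : B) #|[set w in S | (f w == a) && (g w == y)]| = #|S|)%N.
Proof.
rewrite -[RHS](sum_card_fiber S f); apply: eq_bigr => a _.
rewrite -(sum_card_fiber _ g); apply: eq_bigr => y _.
by apply: eq_card => w; rewrite !inE andbA.
Qed.

Section Counting.
Variable F : finFieldType.
Variables (m n l : nat) (C1 C2 W : {vspace 'M[F]_(m, n)}).
Variable psi : {linear 'rV[F]_l -> 'M[F]_(m, n)}.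
Hypothesis C21 : (C2 <= C1)%VS.
Hypothesis hW : (C2 + W)%VS = C1.
Hypothesis hdir : directv (C2 + W)%VS.
Hypothesis psi_inj : injective psi.
Hypothesis psiW : forall x, psi x \in W.
Hypothesis psi_onto : forall w, w \in W -> exists x, psi x = w.
Variables (mu : nat) (B : 'M[F]_(mu, n)).

Local Notation q := #|F|.
Local Notation Om := (wt_space l C2).
Local Notation Y := (fun w : 'rV[F]_l * 'M[F]_(m, n) => (psi w.1 + w.2) *m B^T).

Lemma card_vsp (V : {vspace 'M[F]_(m, n)}) : #|V| = (q ^ \dim V)%N.
Proof. exact: card_vspace. Qed.

Lemma card_Om : #|Om| = (q ^ l * q ^ \dim C2)%N.
Proof.
have -> : Om = finset.setX [set: 'rV[F]_l] [set D in C2].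
  by apply/setP => -[x D]; rewrite !inE.
by rewrite cardsX cardsT card_mx mul1n cardsE card_vsp.
Qed.

Lemma card_A a : #|[set w in Om | w.1 == a]| = (q ^ \dim C2)%N.
Proof.
have -> : [set w in Om | w.1 == a] = finset.setX [set a] [set D in C2].
  by apply/setP => -[x D]; rewrite !inE andbC.
by rewrite cardsX cards1 mul1n cardsE card_vsp.
Qed.

Lemma card_AB a y : #|[set w in Om | (w.1 == a) && (Y w == y)]| != 0%N ->
  #|[set w in Om | (w.1 == a) && (Y w == y)]| =
    (q ^ \dim (C2 :&: lker (fB m B)))%N.
Proof.
rewrite cards_eq0 => /set0Pn[[x0 D0]]; rewrite !inE /= => /andP[D0C /andP[/eqP x0a /eqP Y0]].
subst x0.
have -> : [set w in Om | (w.1 == a) && (Y w == y)] =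
    [set (a, D0 + Z) | Z in (C2 :&: lker (fB m B))%VS].
  apply/setP => -[x D]; rewrite !inE /=; apply/idP/imsetP.
    case/andP => DC /andP[/eqP -> /eqP YD]; exists (D - D0).
      rewrite memv_cap rpredB // memv_ker fBE mulmxBl.
      have -> : D *m B^T - D0 *m B^T = (psi a + D) *m B^T - (psi a + D0) *m B^T by rewrite !mulmxDl opprD addrACA subrr add0r.
      by rewrite YD Y0 subrr eqxx.
    by rewrite addrC subrK.
  case=> Z; rewrite memv_cap memv_ker fBE => /andP[ZC /eqP ZB] [-> ->].
  by rewrite rpredD // eqxx /= addrA mulmxDl Y0 ZB addr0.
rewrite card_imset; first exact: card_vsp.
by move=> Z1 Z2 [] /addrI.
Qed.

Lemma card_B w0 : w0 \in Om ->
  #|[set w in Om | Y w == Y w0]| = (q ^ \dim (C1 :&: lker (fB m B)))%N.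
Proof.
move=> w0Om; set c0 := psi w0.1 + w0.2.
have WC1 : (W <= C1)%VS by rewrite -hW addvSr.
have C2W0 : (C2 :&: W = 0)%VS by apply/directv_addP.
have inC1 x D : D \in C2 -> psi x + D \in C1.
  by move=> DC; rewrite rpredD //; [apply: (subvP WC1); apply: psiW | apply: (subvP C21)].
pose g (w : 'rV[F]_l * 'M[F]_(m, n)) := psi w.1 + w.2 - c0.
rewrite -(card_in_imset (f := g)); last first.
  move=> [x D] [x' D']; rewrite !inE /= => /andP[DC _] /andP[D'C _] /addIr E.
  have E' : psi (x - x') = D' - D.
    by move: E => /= E; rewrite linearB /= -[psi x](addrK D) E [psi x' + D']addrC addrAC addrK.
  have : psi (x - x') \in (C2 :&: W)%VS by rewrite memv_cap psiW E' rpredB.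
  rewrite C2W0 memv0 => /eqP E0.
  have xx : x = x' by apply/eqP; rewrite -subr_eq0; apply/eqP/psi_inj; rewrite E0 linear0.
  by move: E'; rewrite E0 => /esym/eqP; rewrite subr_eq0 => /eqP ->; rewrite xx.
rewrite -card_vsp; apply: eq_card => Z.
apply/imsetP/idP.
  case=> -[x D]; rewrite !inE /= => /andP[DC /eqP YD] ->.
  rewrite memv_cap memv_ker fBE /g mulmxBl YD subrr eqxx andbT.
  by rewrite /= rpredB // inC1 //; move: w0Om; rewrite inE.
rewrite memv_cap memv_ker fBE => /andP[ZC /eqP ZB].
have : c0 + Z \in (C2 + W)%VS.
  by rewrite hW rpredD // inC1 //; move: w0Om; rewrite inE.
case/memv_addP => D DC [w wW E]; have [x xw] := psi_onto wW.
exists (x, D); last by rewrite /g /= xw [w + D]addrC -E addrC addKr.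
by rewrite !inE /= DC /= xw [w + D]addrC -E mulmxDl ZB addr0.
Qed.

End Counting.

Lemma ratio_lemma (R : fieldType) (x N a b z : R) : N != 0 -> a != 0 -> b != 0 ->
  x * N = z * (a * b) -> (x / N) / ((a / N) * (b / N)) = z.
Proof.
move=> N0 a0 b0 E.
have -> : (x / N) / ((a / N) * (b / N)) = (x * N) / (a * b) by field; rewrite N0 a0 b0.
by rewrite E mulfK // mulf_neq0.
Qed.

Section Info.
Variable R : realType.
Variable F : finFieldType.
Variables (m n l : nat) (C1 C2 W : {vspace 'M[F]_(m, n)}).
Variable psi : {linear 'rV[F]_l -> 'M[F]_(m, n)}.
Hypothesis C21 : (C2 <= C1)%VS.
Hypothesis hl : l = (\dim C1 - \dim C2)%N.
Hypothesis hW : (C2 + W)%VS = C1.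
Hypothesis hdir : directv (C2 + W)%VS.
Hypothesis psi_inj : injective psi.
Hypothesis psiW : forall x, psi x \in W.
Hypothesis psi_onto : forall w, w \in W -> exists x, psi x = w.
Variables (mu : nat) (B : 'M[F]_(mu, n)).

Local Notation q := #|F|.
Local Notation Om := (wt_space l C2).

Lemma wt_info_eq :
  wt_info R C2 psi B = (\dim (fB m B @: C1) - \dim (fB m B @: C2))%:R.
Proof.
set c := (\dim (fB m B @: C1) - \dim (fB m B @: C2))%N.
set N := #|Om|.
set Nab := fun a y => #|[set w in Om | (w.1 == a) && ((psi w.1 + w.2) *m B^T == y)]|.
have q1 : 1 < q%:R :> R by rewrite ltr1n; exact: card_finNzRing_gt1.
have q0 : 0 < q%:R :> R by apply: lt_trans q1.
have lnq : ln (q%:R : R) != 0 by rewrite gt_eqF // ln_gt0.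
have N0 : N%:R != 0 :> R by rewrite /N card_Om pnatr_eq0 muln_eq0 !expn_eq0 negb_or !negb_and; apply/andP; split; apply/orP; left; rewrite -lt0n; apply: leq_trans (card_finNzRing_gt1 F).
transitivity (\sum_a \sum_y (Nab a y)%:R / N%:R * c%:R : R).
  apply: eq_bigr => a _; apply: eq_bigr => y _.
  rewrite /uprob /=.
  rewrite -/N -[#|[set w in Om | _ & _]|]/(Nab a y) card_A.
  have [/eqP ->|Nab0] := boolP (Nab a y == 0%N); first by rewrite mul0r eqxx mul0r.
  have NabE := card_AB Nab0.
  move: (Nab0); rewrite cards_eq0 => /set0Pn[w0]; rewrite inE => /andP[w0Om /andP[_ /eqP Yw0]].
  rewrite -Yw0 (card_B C21 hW hdir psi_inj psiW psi_onto _ w0Om) Yw0.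
  have hexp : (q ^ \dim (C2 :&: lker (fB m B)) * (q ^ l * q ^ \dim C2) =
     q ^ c * (q ^ \dim C2 * q ^ \dim (C1 :&: lker (fB m B))))%N.
    rewrite -!expnD; congr (expn q _).
    have := limg_ker_dim (fB m B) C1; have := limg_ker_dim (fB m B) C2.
    have := dimvS C21; have := dimvS (limgS (fB m B) C21).
    rewrite /c; set k1 := \dim C1; set k2 := \dim C2; set e1 := \dim (C1 :&: _); set e2 := \dim (C2 :&: _); set a1 := \dim (_ @: C1); set a2 := \dim (_ @: C2); lia.
  have NE : N = (q ^ l * q ^ \dim C2)%N by rewrite /N card_Om.
  have NabE' : Nab a y = (q ^ \dim (C2 :&: lker (fB m B)))%N by exact: NabE.
  have ratio : (Nab a y)%:R / N%:R /
        ((#|F| ^ \dim C2)%N%:R / N%:R *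
         ((#|F| ^ \dim (C1 :&: lker (fB m B)))%N%:R / N%:R)) = (q%:R : R) ^+ c.
    have qpos : (0 < q)%N by apply: leq_trans (card_finNzRing_gt1 F).
    apply: ratio_lemma => //; try by rewrite pnatr_eq0 -lt0n expn_gt0 qpos.
    by rewrite -natrX -!natrM NabE' NE hexp.
  rewrite ratio lnXn // -[ln _ *+ c]mulr_natl mulfK // ifN //.
  by apply: mulf_neq0; [rewrite pnatr_eq0 | rewrite invr_eq0].
rewrite (eq_bigr (fun a => (\sum_y (Nab a y)%:R) / N%:R * c%:R)); last first.
  by move=> a _; rewrite -!mulr_suml.
rewrite -!mulr_suml.
under eq_bigr => a _ do rewrite -natr_sum.
by rewrite -natr_sum /Nab sum_card_fiber2 -/N divff // mul1r.
Qed.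

End Info.

Lemma bigminn_le (I : finType) (P : pred I) (G : I -> nat) x i :
  P i -> (\big[minn/x]_(j | P j) G j <= G i)%N.
Proof. by move=> Pi; have := bigmin_le_cond x G Pi; rewrite -minEnat. Qed.

Lemma bigminn_attain (I : finType) (P : pred I) (G : I -> nat) x i0 :
  P i0 -> (forall i, P i -> G i <= x)%N ->
  exists2 i, P i & \big[minn/x]_(j | P j) G j = G i.
Proof.
move=> Pi0 Gx; case: (arg_minnP G Pi0) => i Pi Hmin.
exists i => //; apply/eqP; rewrite eqn_leq bigminn_le //=.
apply: (big_ind (fun v => G i <= v)%N) => //; first exact: Gx.
by move=> u v; rewrite leq_min => -> ->.
Qed.

Lemma bigmaxn_attain (I : finType) (P : pred I) (G : I -> nat) i0 :
  P i0 -> exists2 i, P i & \max_(j | P j) G j = G i.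
Proof.
move=> Pi0; case: (arg_maxnP G Pi0) => i Pi Hmax.
exists i => //; apply/eqP; rewrite eqn_leq leq_bigmax_cond // andbT.
by apply/bigmax_leqP => j Pj; exact: Hmax.
Qed.

Section Comb.
Variable F : finFieldType.
Variables m n : nat.
Variables D1 D2 : {vspace 'M[F]_(m, n)}.

Lemma rk_supp_eqmx (A A' : 'M[F]_n) : (A :=: A')%MS -> rk_supp m A = rk_supp m A'.
Proof. by move=> eqA; apply/vspaceP => V; rewrite !mem_rk_supp eqA. Qed.

Lemma reldim_eqmx (A A' : 'M[F]_n) : (A :=: A')%MS -> reldim D1 D2 A = reldim D1 D2 A'.
Proof. by move=> eqA; rewrite /reldim (rk_supp_eqmx eqA). Qed.

Lemma reldim_pos A : (0 < reldim D1 D2 A)%N ->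
  exists C, [/\ C \in D1, (C <= A)%MS & C \notin D2].
Proof.
move=> rpos.
have : ~~ (D1 :&: rk_supp m A <= D2 :&: rk_supp m A)%VS.
  apply/negP => /dimvS; move: rpos; rewrite /reldim; lia.
case/subvPn => C; rewrite !memv_cap mem_rk_supp => /andP[CD1 CA].
by rewrite CA andbT => CD2; exists C.
Qed.

Lemma reldim_pos' A C : (D2 <= D1)%VS -> C \in D1 -> (C <= A)%MS -> C \notin D2 ->
  (0 < reldim D1 D2 A)%N.
Proof.
move=> D21 CD1 CA CD2; rewrite /reldim subn_gt0.
have sub : (D2 :&: rk_supp m A <= D1 :&: rk_supp m A)%VS.
  by apply/subvP => v; rewrite !memv_cap => /andP[/(subvP D21) -> ->].
rewrite ltn_neqAle dimvS // andbT; apply/negP => /eqP edim.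
have : (D2 :&: rk_supp m A)%VS == (D1 :&: rk_supp m A)%VS by rewrite eqEdim sub edim leqnn.
move/eqP => E; move: CD2; have : C \in (D1 :&: rk_supp m A)%VS by rewrite memv_cap CD1 mem_rk_supp.
by rewrite -E memv_cap => /andP[->].
Qed.

End Comb.

Unset Implicit Arguments.
Set Strict Implicit.

Theorem theorem1 (R : realType) (F : finFieldType) (m n : nat)
  (C1 C2 W : {vspace 'M[F]_(m, n)}) (l : nat)
  (psi : {linear 'rV[F]_l -> 'M[F]_(m, n)}) :
  (0 < m)%N -> (0 < n)%N ->
  (C2 <= C1)%VS -> C2 != C1 ->
  l = (\dim C1 - \dim C2)%N ->
  (C2 + W)%VS = C1 -> directv (C2 + W)%VS ->
  injective psi ->
  (forall x, psi x \in W) ->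
  (forall w, w \in W -> exists x, psi x = w) ->
  let I := fun (mu : nat) (B : 'M[F]_(mu, n)) => wt_info R C2 psi B in
  let D1 := dual_code C2 in
  let D2 := dual_code C1 in
  (* (1) *)
  (forall r : nat, (1 <= r <= l)%N ->
     (exists B : 'M[F]_(dMr D1 D2 r, n), r%:R <= I _ B) /\
     (forall (mu : nat) (B : 'M[F]_(mu, n)), r%:R <= I _ B ->
        (dMr D1 D2 r <= mu)%N)) /\
  (* (2) *)
  (forall mu : nat, (mu <= n)%N ->
     (exists mu' : nat, (mu' <= mu)%N /\
        exists B : 'M[F]_(mu', n), I _ B = (KMmu D1 D2 mu)%:R) /\
     (forall (mu' : nat) (B : 'M[F]_(mu', n)), (mu' <= mu)%N ->
        I _ B <= (KMmu D1 D2 mu)%:R)) /\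
  (* (3) *)
  ((forall B : 'M[F]_((dR D1 D2).-1, n), I _ B = 0) /\
   (forall mu : nat, (forall B : 'M[F]_(mu, n), I _ B = 0) ->
      (mu <= (dR D1 D2).-1)%N)).
Proof.
move=> m0 n0 C21 C21neq hl hW hdir psi_inj psiW psi_onto I D1 D2.
have IE mu (B : 'M[F]_(mu, n)) : I mu B = (reldim D1 D2 <<B>>%MS)%:R.
  by rewrite /I (wt_info_eq R C21 hl hW hdir psi_inj psiW psi_onto B) /D1 /D2
     (@reldim_eq _ _ _ _ B C1 C2 C21).
have D21 : (D2 <= D1)%VS.
  apply/subvP => D /mem_dualP HD; apply/mem_dualP => C0 C0C2.
  by apply: HD; apply: (subvP C21).
have dimpos : (\dim C2 < \dim C1)%N.
  rewrite ltnNge; apply/negP => le; move/negP: C21neq; apply.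
  by rewrite eqEdim C21 le.
have dimid (C : {vspace 'M[F]_(m, n)}) : \dim (fB m (1%:M : 'M[F]_n) @: C) = \dim C.
  apply: limg_dim_eq; apply/eqP; rewrite -subv0; apply/subvP => v.
  by rewrite memv_cap memv_ker fBE trmx1 mulmx1 memv0 => /andP[_].
have Ifull : reldim D1 D2 (<<(1%:M : 'M[F]_n)>>%MS) = l.
  by rewrite /D1 /D2 (@reldim_eq _ _ _ _ 1%:M C1 C2 C21) !dimid hl.
have rbE (mu : nat) (A : 'M[F]_(mu, n)) : reldim D1 D2 <<row_base A>>%MS = reldim D1 D2 <<A>>%MS.
  apply: reldim_eqmx; exact: eqmx_trans (genmxE _) (eqmx_trans (eq_row_base A) (eqmx_sym (genmxE _))).
split.
  move=> r /andP[r1 rl].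
  have P1 : (r <= reldim D1 D2 <<(1%:M : 'M[F]_n)>>%MS)%N by rewrite Ifull.
  have [A rA dmin] := @bigminn_attain _ (fun A => r <= reldim D1 D2 A)%N
      (fun A => \rank A) n _ P1 (fun A _ => rank_leq_col A).
  split.
    rewrite /dMr dmin; exists (row_base A).
    by rewrite IE ler_nat rbE (reldim_eqmx _ _ (genmxE A)).
  move=> mu B; rewrite IE ler_nat => rB.
  have h := @bigminn_le _ (fun A => r <= reldim D1 D2 A)%N (fun A => \rank A) n _ rB.
  rewrite /dMr; apply: leq_trans h _.
  by rewrite mxrank_gen rank_leq_row.
split.
  move=> mu mun.
  have P0 : (\rank (0%R : 'M[F]_n) <= mu)%N by rewrite mxrank0.
  have [A0 rA0 kmax] := @bigmaxn_attain _ (fun A : 'M[F]_n => \rank A <= mu)%N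
      (reldim D1 D2) (0%R : 'M[F]_n) P0.
  split.
    exists (\rank A0); split => //; exists (row_base A0).
    by rewrite IE /KMmu kmax rbE (reldim_eqmx _ _ (genmxE A0)).
  move=> mu' B mu'mu; rewrite IE ler_nat; apply: leq_bigmax_cond.
  by rewrite mxrank_gen; apply: leq_trans (rank_leq_row B) mu'mu.
have [C0 [C0D1 _ C0D2]] : exists C, [/\ C \in D1, (C <= <<(1%:M : 'M[F]_n)>>)%MS & C \notin D2].
  by apply: reldim_pos; rewrite Ifull; lia.
have PC0 : (C0 \in D1) && (C0 \notin D2) by rewrite C0D1 C0D2.
have [C dC dRE] := @bigminn_attain _ (fun C => (C \in D1) && (C \notin D2))
   (fun C => \rank C) n C0 PC0 (fun C _ => rank_leq_col C).
move: dC => /andP[CD1 CD2].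
have rkpos (C' : 'M[F]_(m, n)) : C' \notin D2 -> (0 < \rank C')%N.
  move=> C'D2; rewrite lt0n mxrank_eq0; apply: contraNneq C'D2 => ->; exact: mem0v.
split.
  move=> B; rewrite IE; apply/eqP; rewrite pnatr_eq0 eqn0Ngt; apply/negP.
  case/reldim_pos => C' [C'D1 C'B C'D2].
  have PC' : (C' \in D1) && (C' \notin D2) by rewrite C'D1 C'D2.
  have h1 := @bigminn_le _ (fun C => (C \in D1) && (C \notin D2)) (fun C => \rank C) n C' PC'.
  have h2 : (\rank C' <= (dR D1 D2).-1)%N.
    by apply: leq_trans (mxrankS C'B) _; rewrite mxrank_gen rank_leq_row.
  have h3 := rkpos _ C'D2.
  move: h1 h2 h3; rewrite -/(dR D1 D2); lia.
move=> mu Hmu; rewrite leqNgt; apply/negP => lt.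
have dmu : (\rank C <= mu)%N by move: lt; rewrite /dR dRE; have := rkpos _ CD2; lia.
pose B : 'M[F]_(mu, n) := pid_mx (\rank C) *m row_base C.
have CB : (C <= B)%MS.
  have E : row_base C = (pid_mx (\rank C) : 'M[F]_(\rank C, mu)) *m B.
    by rewrite /B mulmxA mul_pid_mx minnn (minn_idPr dmu) pid_mx_1 mul1mx.
  apply: submx_trans (_ : (row_base C <= B)%MS); first by rewrite eq_row_base submx_refl.
  by rewrite [X in (X <= _)%MS]E submxMl.
have := reldim_pos' D21 CD1 (_ : (C <= <<B>>)%MS) CD2.
rewrite genmxE => /(_ CB); move: (Hmu B); rewrite IE => /eqP; rewrite pnatr_eq0 => /eqP ->.
by [].
Qed.
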